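(* Let $K$ be a compact connected subgroup of $U(N)$ and $A\in\mathbb{C}^{N\times N}$. (a) The orbit $\mathcal{O}_K(A)$ is weakly rotationally symmetric if and only if $\mathcal{O}_K(A^\dagger)$ is weakly rotationally symmetric. (b) If $\mathcal{O}_K(A)$ is weakly rotationally symmetric, then so is $\mathcal{O}_K([[A,A^\dagger],A])$.
   Context: $\mathcal{O}_K(X)=\{UXU^\dagger\mid U\in K\}$; it is weakly rotationally symmetric if $e^{i\varphi}\mathcal{O}_K(X)=\mathcal{O}_K(X)$ for all $\varphi\in\mathbb{R}$. $[X,Y]=XY-YX$. *)

(* Defs.v *)
From HB Require Import structures.
From mathcomp Require Import all_boot all_order all_algebra.
From mathcomp Require Import all_classical all_reals all_analysis.
From mathcomp Require Import complex.
Set Implicit Arguments. Unset Strict Implicit. Unset Printing Implicit Defensive.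
Import GRing.Theory Num.Theory ComplexField numFieldNormedType.Exports.
Local Open Scope ring_scope.
Local Open Scope classical_set_scope.

(* The usual (modulus-metric) topology on C = R[i]; matrices 'M[R[i]]_N then
   carry the product topology, i.e. the standard topology of C^{N x N}. *)
HB.instance Definition _ (R : rcfType) := PseudoPointedMetric.copy R[i] (R[i])^o.

Definition dag (R : rcfType) (N : nat) (X : 'M[R[i]]_N) : 'M[R[i]]_N :=
  map_mx (fun z => z^*) X^T.

Definition comm_mx_op (R : rcfType) (N : nat) (X Y : 'M[R[i]]_N) : 'M[R[i]]_N :=
  X *m Y - Y *m X.

Definition unitary (R : rcfType) (N : nat) (U : 'M[R[i]]_N) : Prop :=
  U *m dag U = 1%:M.

Definition subgroup_of_UN (R : rcfType) (N : nat) (K : set 'M[R[i]]_N) : Prop :=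
  [/\ (forall U, K U -> unitary U),
      K 1%:M,
      (forall U V, K U -> K V -> K (U *m V)) &
      (forall U, K U -> K (invmx U))].

Definition orbitK (R : rcfType) (N : nat) (K : set 'M[R[i]]_N) (X : 'M[R[i]]_N)
  : set 'M[R[i]]_N :=
  [set U *m X *m dag U | U in K].

Definition expi (R : realType) (phi : R) : R[i] := (cos phi +i* sin phi)%C.

Definition weakly_rot_sym (R : realType) (N : nat) (S : set 'M[R[i]]_N) : Prop :=
  forall phi : R, [set expi phi *: Y | Y in S] = S.

(* Main.v *)
Require Import Defs.
From HB Require Import structures.
From mathcomp Require Import all_boot all_order all_algebra.
From mathcomp Require Import all_classical all_reals all_analysis.
From mathcomp Require Import complex.
Import GRing.Theory Num.Theory ComplexField numFieldNormedType.Exports.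
Local Open Scope ring_scope.
Local Open Scope classical_set_scope.

Lemma gen (T : comPzRingType) n (e f : T) (X D : 'M[T]_n) : e * f = 1 ->
  (e *: X *m (f *: D) - f *: D *m (e *: X)) *m (e *: X) -
  e *: X *m (e *: X *m (f *: D) - f *: D *m (e *: X)) =
  e *: ((X *m D - D *m X) *m X - X *m (X *m D - D *m X)).
Proof.
move=> he.
do ![rewrite -scalemxAl | rewrite -scalemxAr].
by rewrite !scalerA (mulrC f e) he !scale1r scalerBr.
Qed.

Section Aux.
Variable R : realType.
Variable N : nat.
Implicit Types X Y U : 'M[R[i]]_N.

Lemma dagK X : dag (dag X) = X.
Proof. by apply/matrixP => i j; rewrite !mxE conjCK. Qed.

Lemma dagM X Y : dag (X *m Y) = dag Y *m dag X.
Proof. by rewrite /dag trmx_mul map_mxM. Qed.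

Lemma dagZ (a : R[i]) X : dag (a *: X) = a^* *: dag X.
Proof. by apply/matrixP => i j; rewrite !mxE rmorphM. Qed.

Lemma expi_conj (phi : R) : (expi phi)^* = expi (- phi).
Proof. by rewrite /expi cosN sinN. Qed.

Lemma expi_mulC (phi : R) : expi phi * (expi phi)^* = 1.
Proof.
rewrite expi_conj /expi cosN sinN.
apply/eqP; rewrite eq_complex /=; apply/andP; split; apply/eqP.
- by rewrite mulrN opprK -!expr2 cos2Dsin2.
- by rewrite mulrN mulrC addrC subrr.
Qed.

Lemma expi_mulN (phi : R) : expi phi * expi (- phi) = 1.
Proof. by rewrite -expi_conj expi_mulC. Qed.

Lemma sym_of (S : set 'M[R[i]]_N) :
  (forall phi Y, S Y -> S (expi phi *: Y)) -> weakly_rot_sym S.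
Proof.
move=> H phi; apply/seteqP; split => [_ [Y SY <-]|Y SY]; first by apply: H.
exists (expi (- phi) *: Y); first by apply: H.
by rewrite scalerA expi_mulN scale1r.
Qed.

Lemma sym_to (S : set 'M[R[i]]_N) phi Y :
  weakly_rot_sym S -> S Y -> S (expi phi *: Y).
Proof. by move=> H SY; rewrite -(H phi); exists Y. Qed.

Lemma sym_dag (K : set 'M[R[i]]_N) X :
  weakly_rot_sym (orbitK K X) -> weakly_rot_sym (orbitK K (dag X)).
Proof.
move=> H; apply: sym_of => phi _ [U KU <-].
have : orbitK K X (expi (- phi) *: (U *m X *m dag U)).
  by apply: sym_to => //; exists U.
case=> W KW EW; exists W => //.
have -> : W *m dag X *m dag W = dag (W *m X *m dag W).
  by rewrite !dagM dagK mulmxA.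
by rewrite EW dagZ expi_conj opprK !dagM dagK mulmxA.
Qed.

Definition fcomm X := comm_mx_op (comm_mx_op X (dag X)) X.

Lemma fcomm_conj U X : dag U *m U = 1%:M ->
  fcomm (U *m X *m dag U) = U *m fcomm X *m dag U.
Proof.
move=> hU.
have cM : forall Y Z, (U *m Y *m dag U) *m (U *m Z *m dag U) = U *m (Y *m Z) *m dag U.
  move=> Y Z; rewrite -!mulmxA (mulmxA (dag U) U) hU mul1mx //.
have cB : forall Y Z, U *m Y *m dag U - U *m Z *m dag U = U *m (Y - Z) *m dag U.
  by move=> Y Z; rewrite mulmxBr mulmxBl.
have cD : dag (U *m X *m dag U) = U *m dag X *m dag U.
  by rewrite !dagM dagK mulmxA.
by rewrite /fcomm /comm_mx_op cD !cM cB !cM cB.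
Qed.

Lemma fcomm_scale (e : R[i]) X : e * e^* = 1 -> fcomm (e *: X) = e *: fcomm X.
Proof. by move=> he; rewrite /fcomm /comm_mx_op dagZ; apply: gen. Qed.

End Aux.

Theorem corollary2p25 (R : realType) (N : nat) (K : set 'M[R[i]]_N)
  (hK : subgroup_of_UN K) (hcpt : compact K) (hconn : connected K)
  (A : 'M[R[i]]_N) :
  (weakly_rot_sym (orbitK K A) <-> weakly_rot_sym (orbitK K (dag A))) /\
  (weakly_rot_sym (orbitK K A) ->
     weakly_rot_sym (orbitK K (comm_mx_op (comm_mx_op A (dag A)) A))).
Proof.
case: hK => hU _ _ _.
split.
  split; first exact: sym_dag.
  by move=> H; rewrite -(@dagK R N A); apply: sym_dag.
move=> H; apply: sym_of => phi _ [U KU <-].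
have : orbitK K A (expi phi *: (U *m A *m dag U)) by apply: sym_to => //; exists U.
case=> W KW EW; exists W => //.
have uW : dag W *m W = 1%:M by apply: mulmx1C; apply: hU.
have uU : dag U *m U = 1%:M by apply: mulmx1C; apply: hU.
rewrite -[comm_mx_op _ _]/(@fcomm R N A) -(@fcomm_conj R N W A uW) EW.
by rewrite fcomm_scale ?expi_mulC // fcomm_conj.
Qed.
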